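(* Let $\gamma\in V$ be an element of finite order. Then $\gamma$ admits a non-empty open weakly $\gamma$-wandering subset of $S^1$. If moreover $\gamma\in T$, then $\gamma$ admits a non-empty open $\gamma$-wandering subset of $S^1$ (in fact, in that case any weakly $\gamma$-wandering set is $\gamma$-wandering).
   Context: $S^1$ is the interval $[0,1]$ with $0$ and $1$ identified. Thompson's group $T$ is the group of piecewise linear orientation-preserving homeomorphisms of $S^1$ which preserve the set of finite dyadic fractions, have finitely many breakpoints, all at finite dyadic fractions, and all slopes integer powers of $2$. Thompson's group $V$ is the group of left-continuous bijections of $S^1$ which map finite dyadic fractions to finite dyadic fractions, are differentiable except at finitely many finite dyadic fractions, and on each maximal interval of differentiability are linear with slope an integer power of $2$; $T\le V$. For $\gamma\in V$, a subset $U\subseteq S^1$ is $\gamma$-wandering if for every $n\in\mathbb{Z}$ with $\gamma^n\neq e$ we have $\gamma^n(U)\cap U=\emptyset$; $U$ is weakly $\gamma$-wandering if for every $n\in\mathbb{Z}$, either $\gamma^n$ fixes $U$ pointwise or $\gamma^n(U)\cap U=\emptyset$. *)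

(* Defs.v *)
From Stdlib Require Import Reals ZArith.
Open Scope R_scope.

(* S^1 = [0,1) with 0 and 1 identified: points are represented by reals in [0,1). *)
Definition S1 (x : R) : Prop := 0 <= x < 1.

(* representative of a circle point in (0,1] (0 is represented by 1),
   used to describe left-continuous pieces on half-open intervals (a,b]. *)
Definition rep1 (x : R) : R := if Req_EM_T x 0 then 1 else x.

Definition modone (x : R) : R := frac_part x.

Definition dyadic (x : R) : Prop := exists (k : Z) (n : nat), x = IZR k / 2 ^ n.

Definition cdist (x y : R) : R := Rmin (Rabs (x - y)) (1 - Rabs (x - y)).

Definition open_S1 (U : R -> Prop) : Prop :=
  (forall x, U x -> S1 x) /\
  (forall x, U x -> exists eps, 0 < eps /\ forall y, S1 y -> cdist x y < eps -> U y).

Definition circ_cont (g : R -> R) : Prop :=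
  forall x, S1 x -> forall eps, 0 < eps -> exists delta, 0 < delta /\
    forall y, S1 y -> cdist x y < delta -> cdist (g x) (g y) < eps.

Definition bij_S1 (g : R -> R) : Prop :=
  (forall x, S1 x -> S1 (g x)) /\
  (forall x y, S1 x -> S1 y -> g x = g y -> x = y) /\
  (forall y, S1 y -> exists x, S1 x /\ g x = y).

Definition is_inv_S1 (g h : R -> R) : Prop :=
  forall x, S1 x -> S1 (g x) /\ S1 (h x) /\ g (h x) = x /\ h (g x) = x.

(* Thompson's group V: left-continuous bijections of S^1 preserving dyadics,
   linear with slope a power of 2 (as maps into the circle) on each piece
   (a_i, a_{i+1}] of a finite dyadic subdivision 0 = a_0 < ... < a_n = 1. *)
Definition in_V (g : R -> R) : Prop :=
  bij_S1 g /\
  (forall x, S1 x -> dyadic x -> dyadic (g x)) /\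
  exists (n : nat) (a : nat -> R),
    a 0%nat = 0 /\ a n = 1 /\
    (forall i, (i <= n)%nat -> dyadic (a i)) /\
    (forall i, (i < n)%nat -> a i < a (S i)) /\
    (forall i, (i < n)%nat -> exists (k : Z) (c : R),
        forall x, S1 x -> a i < rep1 x <= a (S i) ->
          g x = modone (powerRZ 2 k * rep1 x + c)).

Definition cyc (a b c : R) : Prop := (a < b < c) \/ (b < c < a) \/ (c < a < b).

Definition orient_pres (g : R -> R) : Prop :=
  forall x y z, S1 x -> S1 y -> S1 z -> x < y < z -> cyc (g x) (g y) (g z).

Definition in_T (g : R -> R) : Prop :=
  in_V g /\ circ_cont g /\
  (exists h, is_inv_S1 g h /\ circ_cont h) /\ orient_pres g.

Definition gpow (g h : R -> R) (n : Z) : R -> R :=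
  match n with
  | Z0 => fun x => x
  | Zpos p => fun x => Nat.iter (Pos.to_nat p) g x
  | Zneg p => fun x => Nat.iter (Pos.to_nat p) h x
  end.

Definition is_id_S1 (f : R -> R) : Prop := forall x, S1 x -> f x = x.

Definition finite_order (g : R -> R) : Prop :=
  exists m : nat, (0 < m)%nat /\ is_id_S1 (Nat.iter m g).

Definition disjoint_image (f : R -> R) (U : R -> Prop) : Prop :=
  forall x, U x -> ~ U (f x).

Definition wandering (g h : R -> R) (U : R -> Prop) : Prop :=
  forall n : Z, ~ is_id_S1 (gpow g h n) -> disjoint_image (gpow g h n) U.

Definition weakly_wandering (g h : R -> R) (U : R -> Prop) : Prop :=
  forall n : Z, (forall x, U x -> gpow g h n x = x) \/ disjoint_image (gpow g h n) U.

(* Main.v *)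
Require Import Defs.
From Stdlib Require Import Reals ZArith Lra Lia Psatz.
Open Scope R_scope.

Lemma iter_S1 (g : R -> R) : (forall x, S1 x -> S1 (g x)) ->
  forall k x, S1 x -> S1 (Nat.iter k g x).
Proof. intros H; induction k; simpl; auto. Qed.

Lemma iter_mul (g:R->R) a b x : Nat.iter a (Nat.iter b g) x = Nat.iter (a*b) g x.
Proof. induction a; simpl; [reflexivity|]. rewrite IHa, <- Nat.iter_add. reflexivity. Qed.

Lemma iter_multiple (g : R -> R) m : is_id_S1 (Nat.iter m g) ->
  forall q x, S1 x -> Nat.iter (q*m) g x = x.
Proof. intros Hm q x Hx. rewrite <- iter_mul. induction q; simpl; [reflexivity|].
  rewrite IHq. apply Hm; auto. Qed.

Lemma iter_mod (g : R -> R) m : (0<m)%nat -> is_id_S1 (Nat.iter m g) ->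
  forall j x, S1 x -> Nat.iter j g x = Nat.iter (j mod m) g x.
Proof. intros Hm Hid j x Hx.
  assert (Ej: j = (j mod m + (j / m) * m)%nat) by (pose proof (Nat.div_mod_eq j m); lia).
  transitivity (Nat.iter (j mod m + (j / m) * m)%nat g x); [f_equal; exact Ej|].
  rewrite Nat.iter_add.
  rewrite (iter_multiple g m Hid); auto. Qed.

Lemma h_iter g h m : is_inv_S1 g h -> (0<m)%nat -> is_id_S1 (Nat.iter m g) ->
  forall y, S1 y -> h y = Nat.iter (m-1) g y.
Proof. intros Hinv Hm Hid y Hy.
  assert (HS: forall x, S1 x -> S1 (g x)) by (intros; apply Hinv; auto).
  assert (Hz: S1 (Nat.iter (m-1) g y)) by (apply iter_S1; auto).
  assert (E: g (Nat.iter (m-1) g y) = y).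
  { change (Nat.iter (S (m-1)) g y = y). replace (S (m-1)) with m by lia. apply Hid; auto. }
  rewrite <- E at 1. destruct (Hinv _ Hz) as (_&_&_&E2). exact E2. Qed.

Lemma gpow_iter g h m : is_inv_S1 g h -> (0<m)%nat -> is_id_S1 (Nat.iter m g) ->
  forall n, exists j, (j<m)%nat /\ forall x, S1 x -> gpow g h n x = Nat.iter j g x.
Proof. intros Hinv Hm Hid.
  assert (HS: forall x, S1 x -> S1 (g x)) by (intros; apply Hinv; auto).
  assert (hp: forall p x, S1 x -> Nat.iter p h x = Nat.iter (p*(m-1)) g x).
  { induction p; intros x Hx; simpl. reflexivity. rewrite IHp by auto.
    rewrite (h_iter g h m) by (auto; apply iter_S1; auto). rewrite <- Nat.iter_add. reflexivity. }
  assert (Hmo: forall j, (j mod m < m)%nat) by (intros; apply Nat.mod_upper_bound; lia).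
  intros [|p|p].
  - exists 0%nat. split; [lia|]. intros; reflexivity.
  - exists (Pos.to_nat p mod m)%nat. split; auto. intros x Hx; simpl. apply iter_mod; auto.
  - exists ((Pos.to_nat p * (m-1)) mod m)%nat. split; auto. intros x Hx; simpl.
    rewrite hp by auto. apply iter_mod; auto.
Qed.

Lemma int_part_eq z v : IZR z <= v < IZR z + 1 -> Int_part v = z.
Proof. intros Hv. destruct (base_Int_part v) as [H1 H2].
  assert (A: IZR (Int_part v) < IZR (z + 1)) by (rewrite plus_IZR; lra).
  assert (B: IZR z < IZR (Int_part v + 1)) by (rewrite plus_IZR; lra).
  apply lt_IZR in A. apply lt_IZR in B. lia. Qed.

Lemma find_piece (n:nat) (a: nat -> R) p : a 0%nat = 0 -> a n = 1 -> 0 < p <= 1 ->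
  exists i, (i < n)%nat /\ a i < p <= a (S i).
Proof. intros H0 Hn Hp.
  assert (forall j, p <= a j -> exists i, (i<j)%nat /\ a i < p <= a (S i)).
  { induction j; intros Hj. lra. destruct (Rlt_le_dec (a j) p) as [r|r].
    exists j; split; [lia|split; lra]. destruct (IHj r) as [i [? ?]]. exists i; split; [lia|auto]. }
  apply H; lra. Qed.

Lemma pieceA g : in_V g -> forall l r, 0 <= l -> l < r -> r <= 1 ->
  exists l' r' s t, l <= l' /\ l' < r' /\ r' <= r /\ 0 < s /\ 0 <= s*l'+t /\ s*r'+t <= 1 /\
   forall x, l' < x < r' -> g x = s*x+t.
Proof.
  intros [_ [_ [n [a [Ha0 [Han [_ [Hinc Hpc]]]]]]]] l r Hl Hlr Hr.
  destruct (find_piece n a ((l+r)/2) Ha0 Han) as [i [Hi [Hai1 Hai2]]]; [lra|].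
  destruct (Hpc i Hi) as [k [c Hkc]].
  set (s := powerRZ 2 k) in *. assert (Hs: 0 < s) by (apply powerRZ_lt; lra).
  set (p := (l+r)/2) in *.
  set (L := Rmax (a i) l).
  assert (HL1: a i <= L) by apply Rmax_l. assert (HL2: l <= L) by apply Rmax_r.
  assert (HLp: L < p). { unfold L. apply Rmax_lub_lt; [lra | unfold p; lra]. }
  set (z := Int_part (s*L + c)).
  destruct (base_Int_part (s*L+c)) as [Hz1 Hz2]. fold z in Hz1, Hz2.
  set (w := (IZR z + 1 - c)/s).
  assert (Hw: s * w = IZR z + 1 - c) by (unfold w; field; lra).
  assert (HLw: L < w). { apply (Rmult_lt_reg_l s); auto. lra. }
  set (R' := Rmin p w).
  assert (HR1: R' <= p) by apply Rmin_l. assert (HR2: R' <= w) by apply Rmin_r.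
  exists L, R', s, (c - IZR z).
  assert (HsR: s*R' <= s*w) by (apply Rmult_le_compat_l; lra).
  repeat split; try lra.
  - unfold R'; apply Rmin_glb_lt; lra.
  - unfold p in HR1; lra.
  - intros x [Hx1 Hx2].
    assert (HSx: S1 x) by (unfold S1, p in *; lra).
    assert (Hr1: rep1 x = x). { unfold rep1; destruct (Req_EM_T x 0); lra. }
    rewrite Hkc; [rewrite Hr1 | auto | rewrite Hr1; lra].
    unfold modone, frac_part.
    assert (s*L < s*x) by (apply Rmult_lt_compat_l; lra).
    assert (s*x < s*w) by (apply Rmult_lt_compat_l; lra).
    rewrite (int_part_eq z) by lra. ring.
Qed.

Lemma affB g : in_V g -> forall M l r, 0 <= l -> l < r -> r <= 1 ->
  exists l' r', l <= l' /\ l' < r' /\ r' <= r /\ forall j, (j <= M)%nat ->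
    exists s t, 0 < s /\ 0 <= s*l'+t /\ s*r'+t <= 1 /\
      forall x, l' < x < r' -> Nat.iter j g x = s*x+t.
Proof.
  intros Hg M l r Hl Hlr Hr. induction M.
  - exists l, r. repeat split; try lra. intros j Hj. assert (j=0%nat) by lia. subst.
    exists 1, 0. repeat split; try lra. intros. simpl. ring.
  - destruct IHM as [l1 [r1 [H1 [H2 [H3 H4]]]]].
    destruct (H4 M (le_n M)) as [s [t [Hs [Hb1 [Hb2 Hf]]]]].
    assert (s*l1 < s*r1) by (apply Rmult_lt_compat_l; lra).
    destruct (pieceA g Hg (s*l1+t) (s*r1+t)) as [l2 [r2 [s' [t' [G1 [G2 [G3 [G4 [G5 [G6 G7]]]]]]]]]]; try lra.
    set (l' := (l2 - t)/s). set (r' := (r2-t)/s).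
    assert (E1: s*l'+t = l2) by (unfold l'; field; lra).
    assert (E2: s*r'+t = r2) by (unfold r'; field; lra).
    assert (l1 <= l') by nra. assert (l' < r') by nra. assert (r' <= r1) by nra.
    exists l', r'. repeat split; try lra.
    intros j Hj. destruct (Nat.eq_dec j (S M)).
    + subst j. exists (s'*s), (s'*t+t'). repeat split.
      * nra.
      * replace (s' * s * l' + (s' * t + t')) with (s'*(s*l'+t) + t') by ring. rewrite E1. lra.
      * replace (s' * s * r' + (s' * t + t')) with (s'*(s*r'+t) + t') by ring. rewrite E2. lra.
      * intros x Hx. change (g (Nat.iter M g x) = s' * s * x + (s' * t + t')).
        assert (s*l' < s*x) by (apply Rmult_lt_compat_l; lra).
        assert (s*x < s*r') by (apply Rmult_lt_compat_l; lra).
        rewrite Hf by lra. rewrite G7 by lra. ring.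
    + destruct (H4 j) as [s0 [t0 [K1 [K2 [K3 K4]]]]]; [lia|].
      exists s0, t0.
      assert (s0*l1 <= s0*l') by (apply Rmult_le_compat_l; lra).
      assert (s0*r' <= s0*r1) by (apply Rmult_le_compat_l; lra).
      repeat split; try lra. intros x Hx. apply K4; lra.
Qed.

Lemma shrink_pt (f: R->R) l r s t m : l < m < r -> 0 < s -> (forall x, l<x<r -> f x = s*x+t) ->
  s*m+t <> m ->
  exists l' r', l <= l' /\ l' < r' /\ r' <= r /\ (forall x, l'<x<r' -> ~ (l' < f x < r')).
Proof.
  intros Hm Hs Hf Hne.
  set (d := s*m+t - m).
  assert (Hs1: 0 < s+1) by lra.
  set (D := Rabs d).
  assert (HD: 0 < D) by (unfold D; apply Rabs_pos_lt; unfold d; lra).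
  set (e := Rmin (Rmin (m-l) (r-m)) (D/(s+1))).
  assert (Hq: D/(s+1)*(s+1) = D) by (field; lra).
  assert (He1: e <= Rmin (m-l) (r-m)) by apply Rmin_l.
  assert (He2: Rmin (m-l) (r-m) <= m-l) by apply Rmin_l.
  assert (He3: Rmin (m-l) (r-m) <= r-m) by apply Rmin_r.
  assert (He0: 0 < e) by (unfold e; apply Rmin_glb_lt; [apply Rmin_glb_lt; lra|
        apply Rdiv_lt_0_compat; lra]).
  assert (He4: e*(s+1) <= D) by
    (rewrite <- Hq; apply Rmult_le_compat_r; [lra| apply Rmin_r]).
  exists (m-e), (m+e); repeat split; try lra. intros x Hx [Hy1 Hy2].
  rewrite Hf in Hy1, Hy2 by lra.
  assert (s*(m-e) < s*x) by (apply Rmult_lt_compat_l; lra).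
  assert (s*x < s*(m+e)) by (apply Rmult_lt_compat_l; lra).
  unfold D in He4. destruct (Rcase_abs d) as [Hd|Hd];
  [rewrite Rabs_left in He4 by lra | rewrite Rabs_right in He4 by lra];
  unfold d in *; lra.
Qed.

Lemma shrinkC (f: R->R) l r s t : l < r -> 0 < s -> (forall x, l<x<r -> f x = s*x+t) ->
  exists l' r', l <= l' /\ l' < r' /\ r' <= r /\
   ((forall x, l'<x<r' -> f x = x) \/ (forall x, l'<x<r' -> ~ (l' < f x < r'))).
Proof.
  intros Hlr Hs Hf.
  set (m1 := l + (r-l)/3). set (m2 := l + 2*(r-l)/3).
  assert (H1: l < m1 < r) by (unfold m1; lra).
  assert (H2: l < m2 < r) by (unfold m2; lra).
  destruct (Req_EM_T (s*m1+t) m1) as [e1|e1].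
  2: { destruct (shrink_pt f l r s t m1) as [l' [r' ?]]; auto. exists l', r'; intuition. }
  destruct (Req_EM_T (s*m2+t) m2) as [e2|e2].
  2: { destruct (shrink_pt f l r s t m2) as [l' [r' ?]]; auto. exists l', r'; intuition. }
  assert (Z: (s-1)*(m2 - m1) = 0) by lra.
  apply Rmult_integral in Z. destruct Z as [Z|Z]; [|unfold m1, m2 in Z; lra].
  assert (s = 1) by lra. subst s. assert (t = 0) by lra. subst t.
  exists l, r. repeat split; try lra. left. intros x Hx. rewrite Hf by auto. ring.
Qed.

Lemma shrinkD (g : R -> R) M l0 r0 : l0 < r0 ->
  (forall j, (j <= M)%nat -> exists s t, 0 < s /\ forall x, l0<x<r0 -> Nat.iter j g x = s*x+t) ->
  forall J, (J <= M)%nat -> exists l' r', l0 <= l' /\ l' < r' /\ r' <= r0 /\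
    forall j, (j < J)%nat -> (forall x, l'<x<r' -> Nat.iter j g x = x) \/
                             (forall x, l'<x<r' -> ~ (l' < Nat.iter j g x < r')).
Proof.
  intros Hlr Ha. induction J; intros HJ.
  - exists l0, r0. repeat split; try lra. intros; lia.
  - destruct IHJ as [l1 [r1 [A1 [A2 [A3 A4]]]]]; [lia|].
    destruct (Ha J ltac:(lia)) as [s [t [Hs Hf]]].
    destruct (shrinkC (Nat.iter J g) l1 r1 s t) as [l2 [r2 [B1 [B2 [B3 B4]]]]]; auto.
    { intros; apply Hf; lra. }
    exists l2, r2. repeat split; try lra. intros j Hj.
    destruct (Nat.eq_dec j J). { subst j; auto. }
    destruct (A4 j) as [C|C]; [lia| |].
    + left. intros; apply C; lra.
    + right. intros x Hx Hc. apply (C x); lra.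
Qed.

Lemma interval_open l r : 0 <= l -> r <= 1 -> open_S1 (fun x => l < x < r).
Proof.
  intros Hl Hr. split. { intros x Hx; unfold S1; lra. }
  intros x Hx. exists (Rmin (x-l) (r-x)). split. { apply Rmin_glb_lt; lra. }
  assert (E1: Rmin (x-l) (r-x) <= x - l) by apply Rmin_l.
  assert (E2: Rmin (x-l) (r-x) <= r - x) by apply Rmin_r.
  revert E1 E2. generalize (Rmin (x-l) (r-x)). intros e E1 E2 y Hy Hd.
  unfold cdist, S1 in *.
  destruct (Rcase_abs (x-y)) as [Ha|Ha];
    [rewrite Rabs_left in Hd by lra | rewrite Rabs_right in Hd by lra];
    unfold Rmin in Hd; destruct (Rle_dec _ _) in Hd; split; lra.
Qed.

Lemma cyc_rot a b c: cyc a b c -> cyc b c a.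
Proof. unfold cyc; tauto. Qed.

Lemma cyc_pres g : (forall x, S1 x -> S1 (g x)) -> orient_pres g ->
  forall a b c, S1 a -> S1 b -> S1 c -> cyc a b c -> cyc (g a) (g b) (g c).
Proof.
  intros HS Ho a b c Ha Hb Hc [H|[H|H]].
  - apply Ho; auto.
  - apply cyc_rot, cyc_rot, Ho; auto.
  - apply cyc_rot, Ho; auto.
Qed.

Lemma cyc_pres_iter g : (forall x, S1 x -> S1 (g x)) -> orient_pres g ->
  forall k a b c, S1 a -> S1 b -> S1 c -> cyc a b c ->
   cyc (Nat.iter k g a) (Nat.iter k g b) (Nat.iter k g c).
Proof.
  intros HS Ho. induction k; intros; simpl; auto.
  apply cyc_pres; auto; apply iter_S1; auto.
Qed.

Lemma cyc_trans x a b c : cyc x a b -> cyc x b c -> cyc x a c.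
Proof.
  unfold cyc; intros [[? ?]|[[? ?]|[? ?]]] [[? ?]|[[? ?]|[? ?]]];
  first [ left; split; lra | right; left; split; lra | right; right; split; lra | exfalso; lra ].
Qed.

Lemma cyc_irr x a : ~ cyc x a a.
Proof. unfold cyc; intros [[? ?]|[[? ?]|[? ?]]]; lra. Qed.

Lemma cyc_tri x a b : a <> x -> b <> x -> a <> b -> cyc x a b \/ cyc x b a.
Proof.
  intros H1 H2 H3. unfold cyc.
  destruct (Rtotal_order x a) as [?|[?|?]], (Rtotal_order x b) as [?|[?|?]],
    (Rtotal_order a b) as [?|[?|?]];
  first [ exfalso; congruence
        | left; left; split; lra | left; right; left; split; lra | left; right; right; split; lra
        | right; left; split; lra | right; right; left; split; lra | right; right; right; split; lra
        | exfalso; lra ].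
Qed.

Lemma iter_inj (g : R -> R) : (forall x, S1 x -> S1 (g x)) ->
  (forall a b, S1 a -> S1 b -> g a = g b -> a = b) ->
  forall k a b, S1 a -> S1 b -> Nat.iter k g a = Nat.iter k g b -> a = b.
Proof.
  intros HS Hi. induction k; simpl; intros a b Ha Hb E; auto.
  apply IHk; auto. apply Hi; auto; apply iter_S1; auto.
Qed.

Lemma fix_id (f : R -> R) m : (0<m)%nat -> (forall x, S1 x -> S1 (f x)) ->
  (forall a b c, S1 a -> S1 b -> S1 c -> cyc a b c -> cyc (f a) (f b) (f c)) ->
  (forall a b, S1 a -> S1 b -> f a = f b -> a = b) ->
  is_id_S1 (Nat.iter m f) -> forall x, S1 x -> f x = x -> is_id_S1 f.
Proof.
  intros Hm HS Hc Hinj Hid x Hx Hfx y Hy.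
  destruct (Req_EM_T (f y) y) as [e|ne]; auto. exfalso.
  assert (Hyx: y <> x) by (intro; subst; auto).
  assert (Hfyx: f y <> x) by (intro E; apply Hyx; apply Hinj; auto; congruence).
  assert (Hiter: forall k a b c, S1 a -> S1 b -> S1 c -> cyc a b c ->
     cyc (Nat.iter k f a) (Nat.iter k f b) (Nat.iter k f c)).
  { induction k; intros; simpl; auto. apply Hc; auto; apply iter_S1; auto. }
  assert (HfixK: forall k, Nat.iter k f x = x).
  { induction k; simpl; auto. rewrite IHk; auto. }
  assert (HmE: Nat.iter (S (m-1)) f y = y).
  { replace (S (m-1)) with m by lia. apply Hid; auto. }
  destruct (cyc_tri x y (f y)) as [C|C]; auto.
  - assert (K: forall k, cyc x y (Nat.iter (S k) f y)).
    { induction k. simpl. auto. apply cyc_trans with (Nat.iter (S k) f y); auto.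
      pose proof (Hiter (S k) x y (f y) Hx Hy (HS y Hy) C) as H.
      rewrite HfixK in H. rewrite <- Nat.iter_succ_r in H. exact H. }
    specialize (K (m-1)%nat). rewrite HmE in K. apply (cyc_irr x y); auto.
  - assert (K: forall k, cyc x (Nat.iter (S k) f y) y).
    { induction k. simpl. auto. apply cyc_trans with (Nat.iter (S k) f y); auto.
      pose proof (Hiter (S k) x (f y) y Hx (HS y Hy) Hy C) as H.
      rewrite HfixK in H. rewrite <- Nat.iter_succ_r in H. exact H. }
    specialize (K (m-1)%nat). rewrite HmE in K. apply (cyc_irr x y); auto.
Qed.

Theorem lemma4p3 (g h : R -> R) :
  in_V g -> is_inv_S1 g h -> finite_order g ->
  (exists U : R -> Prop, open_S1 U /\ (exists x, U x) /\ weakly_wandering g h U) /\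
  (in_T g ->
     (exists U : R -> Prop, open_S1 U /\ (exists x, U x) /\ wandering g h U) /\
     (forall U : R -> Prop, (forall x, U x -> S1 x) ->
        weakly_wandering g h U -> wandering g h U)).
Proof.
  intros Hg Hinv [m [Hm Hid]].
  assert (HS: forall x, S1 x -> S1 (g x)) by (intros; apply Hinv; auto).
  pose proof (gpow_iter g h m Hinv Hm Hid) as Hgp.
  assert (P1: exists U : R -> Prop, open_S1 U /\ (exists x, U x) /\ weakly_wandering g h U).
  { destruct (affB g Hg m 0 1) as [l0 [r0 [A1 [A2 [A3 A4]]]]]; try lra.
    destruct (shrinkD g m l0 r0 A2) with (J := m) as [l' [r' [B1 [B2 [B3 B4]]]]]; auto.
    { intros j Hj. destruct (A4 j Hj) as [s [t [? [? [? ?]]]]]. exists s, t; auto. }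
    exists (fun x => l' < x < r'). split; [apply interval_open; lra|]. split.
    { exists ((l'+r')/2); lra. }
    intros n. destruct (Hgp n) as [j [Hj Hj2]].
    destruct (B4 j Hj) as [C|C].
    - left. intros x Hx. rewrite Hj2 by (unfold S1; lra). auto.
    - right. intros x Hx Hc. rewrite Hj2 in Hc by (unfold S1; lra). apply (C x); auto. }
  split; auto.
  intros [_ [_ [_ Hor]]].
  assert (Hwk: forall U : R -> Prop, (forall x, U x -> S1 x) ->
        weakly_wandering g h U -> wandering g h U).
  { intros U HU Hw n Hn. destruct (Hw n) as [Hf|Hd]; auto.
    intros x Hx Hc. apply Hn. destruct (Hgp n) as [j [Hj Hj2]].
    assert (Hidj: is_id_S1 (Nat.iter j g)).
    { apply (fix_id (Nat.iter j g) m Hm) with (x := x); auto.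
      - intros; apply iter_S1; auto.
      - apply cyc_pres_iter; auto.
      - apply iter_inj; auto. destruct Hg as [[_ [Hi _]] _]. exact Hi.
      - intros y Hy. rewrite iter_mul, Nat.mul_comm. apply iter_multiple; auto.
      - rewrite <- Hj2 by auto. apply Hf; auto. }
    intros y Hy. rewrite Hj2 by auto. apply Hidj; auto. }
  split; auto.
  destruct P1 as [U [HU1 [HU2 HU3]]]. exists U; split; [auto|split; [auto|]].
  apply Hwk; auto. apply HU1.
Qed.
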